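(* Under assumptions (A1)–(A6), for (almost) every $x$, $$\psi(x) = P(Y(1,0)=0\mid Y(1,1)=1,M(1)=1,X=x)\,P(M(0)=0\mid M(1)=1,X=x),$$ and consequently $$\psi(x)\le P(M(0)=0\mid M(1)=1,X=x) = 1-\frac{\gamma_0(x)}{\gamma_1(x)}.$$
   Context: Observed data $O=(X,A,M,Y)$ with covariates $X\in\mathbb{R}^d$, binary exposure $A$, binary mediator $M$, binary outcome $Y$. For $a,m\in\{0,1\}$, $Y(a,m)$ is the potential outcome under $A=a,M=m$, $M(a)$ the potential mediator, $Y(a):=Y(a,M(a))$, cross-world $Y(a,M(a'))$ by substitution, all on a common probability space with $O$. $\gamma_a(x)=P(M=1\mid A=a,X=x)$. $\psi(x)=P(Y(1,M(0))=0,\,Y(0,M(0))=0\mid Y(1,M(1))=1,M(1)=1,X=x)$. Assumptions: (A1) $A=a,M=m\Rightarrow Y=Y(a,m)$ and $A=a\Rightarrow M=M(a)$. (A2) $Y(1,1)\ge Y(1,0)\ge Y(0,0)$, $Y(1,1)\ge Y(0,1)$, $M(1)\ge M(0)$. (A3) $A\perp\{Y(1,1),Y(1,0),Y(0,1),Y(0,0),M(1),M(0)\}\mid X$. (A4) $\{Y(1,1),Y(1,0),Y(0,1),Y(0,0)\}\perp\{M(1),M(0)\}\mid X$. (A5) for some $\epsilon>0$, $P\{\min_{a,m}P(A=a,M=m\mid X)\ge\epsilon\}=1$. (A6) $P\{P(Y=1\mid A=1,M=1,X)\ge\epsilon\}=1$. *)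

(* Defs.v *)
From HB Require Import structures.
From mathcomp Require Import all_boot all_order all_algebra.
From mathcomp Require Import all_classical all_reals all_analysis.
Set Implicit Arguments. Unset Strict Implicit. Unset Printing Implicit Defensive.
Import Order.TTheory GRing.Theory Num.Theory.
Local Open Scope ring_scope.
Local Open Scope classical_set_scope.

(* Binary variables are booleans: true = 1, false = 0. *)

(* The finite "data vector" collecting all binary variables:
   ((A, M, Y), (M(0), M(1)), (Y(0,0), Y(0,1), Y(1,0), Y(1,1))). *)
Definition outcome : finType :=
  ((bool * bool * bool) * (bool * bool) * (bool * bool * bool * bool))%type.

Definition oA (o : outcome) : bool := o.1.1.1.1.
Definition oM (o : outcome) : bool := o.1.1.1.2.
Definition oY (o : outcome) : bool := o.1.1.2.
Definition oMp (a : bool) (o : outcome) : bool := if a then o.1.2.2 else o.1.2.1.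
Definition oYp (a m : bool) (o : outcome) : bool :=
  match a, m with
  | false, false => o.2.1.1.1
  | false, true  => o.2.1.1.2
  | true,  false => o.2.1.2
  | true,  true  => o.2.2
  end.
Definition oMs (o : outcome) : bool * bool := o.1.2.
Definition oYs (o : outcome) : bool * bool * bool * bool := o.2.
Definition oPO (o : outcome) := (oMs o, oYs o).

Definition data (Omega : Type) (A M Y : Omega -> bool) (Mp : bool -> Omega -> bool)
  (Yp : bool -> bool -> Omega -> bool) (w : Omega) : outcome :=
  ((A w, M w, Y w), (Mp false w, Mp true w),
   (Yp false false w, Yp false true w, Yp true false w, Yp true true w)).

(* Conditional probability of an event E of the data vector given X = x,
   computed from a conditional distribution q(x) of the data vector given X = x. *)
Definition cP (R : realType) (T : Type) (q : T -> outcome -> R) (x : T)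
  (E : pred outcome) : R := \sum_(o : outcome | E o) q x o.

Definition ccP (R : realType) (T : Type) (q : T -> outcome -> R) (x : T)
  (E C : pred outcome) : R :=
  cP q x (fun o => E o && C o) / cP q x C.

Definition is_cond_dist (R : realType) (dO : measure_display) (Omega : measurableType dO)
  (P : probability Omega R) (dT : measure_display) (T : measurableType dT)
  (X : Omega -> T) (D : Omega -> outcome) (q : T -> outcome -> R) : Prop :=
  (forall x o, 0 <= q x o) /\
  (forall x, \sum_(o : outcome) q x o = 1) /\
  (forall o, measurable_fun setT (fun x => q x o)) /\
  (forall o (B : set T), measurable B ->
     P (D @^-1` [set o] `&` X @^-1` B) =
     (\int[P]_(w in X @^-1` B) (q (X w) o)%:E)%E).

Definition cindep (R : realType) (T : Type) (U V : eqType) (q : T -> outcome -> R) (x : T)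
  (f : outcome -> U) (g : outcome -> V) : Prop :=
  forall u v, cP q x (fun o => (f o == u) && (g o == v)) =
              cP q x (fun o => f o == u) * cP q x (fun o => g o == v).

Definition gammaX (R : realType) (T : Type) (q : T -> outcome -> R) (a : bool) (x : T) : R :=
  ccP q x (fun o => oM o) (fun o => oA o == a).

Definition psiX (R : realType) (T : Type) (q : T -> outcome -> R) (x : T) : R :=
  ccP q x (fun o => ~~ oYp true (oMp false o) o && ~~ oYp false (oMp false o) o)
          (fun o => oYp true (oMp true o) o && oMp true o).

(* Main.v *)
Require Import Defs.
From HB Require Import structures.
From mathcomp Require Import all_boot all_order all_algebra.
From mathcomp Require Import all_classical all_reals all_analysis.
From mathcomp Require Import measurable_realfun.
From mathcomp Require Import ring lra.
Import Order.TTheory GRing.Theory Num.Theory.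
Local Open Scope ring_scope.
Local Open Scope classical_set_scope.


Definition good (o : outcome) : bool :=
  [&& (oYp false false o ==> oYp true false o), (oYp true false o ==> oYp true true o),
      (oYp false true o ==> oYp true true o), (oMp false o ==> oMp true o),
      oM o == oMp (oA o) o & oY o == oYp (oA o) (oM o) o].


Section Pure.
Variables (R : realType) (T : Type) (q : T -> outcome -> R) (x : T).

Lemma cP_good (E E' : pred outcome) : (forall o, ~~ good o -> q x o = 0) ->
  (forall o, good o -> E o = E' o) -> cP q x E = cP q x E'.
Proof.
move=> H0 HE; rewrite /cP [LHS]big_mkcond [RHS]big_mkcond; apply: eq_bigr => o _.
by case: (boolP (good o)) => g; [rewrite HE | rewrite H0 //; case: ifP; case: ifP].
Qed.

Lemma cP_part (U : finType) (f : outcome -> U) (E : pred outcome) (a : pred U) :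
  cP q x (fun o => a (f o) && E o) = \sum_(u | a u) cP q x (fun o => (f o == u) && E o).
Proof.
rewrite /cP (partition_big f a) /=; last by move=> o /andP[].
apply: eq_bigr => u au; apply: eq_bigl => o.
case: (eqVneq (f o) u) => [->|]; first by rewrite au andbC.
by rewrite andbF.
Qed.

Lemma cindep_pred (U V : finType) (f : outcome -> U) (g : outcome -> V) (a : pred U) (b : pred V) :
  cindep q x f g ->
  cP q x (fun o => a (f o) && b (g o)) = cP q x (fun o => a (f o)) * cP q x (fun o => b (g o)).
Proof.
move=> H.
rewrite cP_part.
have -> : cP q x (fun o => a (f o)) = cP q x (fun o => a (f o) && true).
  by apply: eq_bigl => o; rewrite andbT.
have -> : cP q x (fun o => b (g o)) = cP q x (fun o => b (g o) && true).
  by apply: eq_bigl => o; rewrite andbT.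
rewrite cP_part cP_part big_distrl /=; apply: eq_bigr => u _.
have -> : cP q x (fun o => (f o == u) && b (g o)) = cP q x (fun o => b (g o) && (f o == u)).
  by apply: eq_bigl => o; rewrite andbC.
rewrite cP_part big_distrr /=; apply: eq_bigr => v _.
rewrite /=.
have -> : cP q x (fun o => (g o == v) && (f o == u)) = cP q x (fun o => (f o == u) && (g o == v)).
  by apply: eq_bigl => o; rewrite andbC.
rewrite H; congr (_ * _); by apply: eq_bigl => o; rewrite andbT.
Qed.

Lemma cP_split (E F : pred outcome) :
  cP q x E = cP q x (fun o => E o && F o) + cP q x (fun o => E o && ~~ F o).
Proof. by rewrite /cP (bigID F) /=. Qed.

Lemma cP_ge0 E : (forall o, 0 <= q x o) -> 0 <= cP q x E.
Proof. by move=> H; apply: sumr_ge0. Qed.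

End Pure.


Ltac crush := intros [[[[za zm] zy] [zm0 zm1]] [[[zy00 zy01] zy10] zy11]]; destruct za, zm, zy, zm0, zm1, zy00, zy01, zy10, zy11; done.

Lemma key (R : realType) (T : Type) (q : T -> outcome -> R) (x : T) (eps : R) :
(forall o, 0 <= q x o) -> (forall o, ~~ good o -> q x o = 0) ->
  cindep q x oA oPO -> cindep q x oYs oMs -> 0 < eps ->
(forall a m : bool, eps <= cP q x (fun o => (oA o == a) && (oM o == m))) ->
     psiX q x =
       ccP q x (fun o => ~~ oYp true false o) (fun o => oYp true true o && oMp true o)
       * ccP q x (fun o => ~~ oMp false o) (fun o => oMp true o)
     /\ psiX q x <= ccP q x (fun o => ~~ oMp false o) (fun o => oMp true o)
     /\ ccP q x (fun o => ~~ oMp false o) (fun o => oMp true o)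
        = 1 - gammaX q false x / gammaX q true x.
Proof.
move=> q0 qg HA HYM eps0 Heps.
set yM := cP q x (fun o => ~~ (oYs o).1.2 && (oYs o).2).
set y1 := cP q x (fun o => (oYs o).2).
set y11 := cP q x (fun o => (oYs o).2 && (oYs o).1.2).
set mM := cP q x (fun o => ~~ (oMs o).1 && (oMs o).2).
set m1 := cP q x (fun o => (oMs o).2).
set m0 := cP q x (fun o => (oMs o).1).
set pa := fun a => cP q x (fun o => oA o == a).
have h1 : cP q x (fun o => (~~ oYp true (oMp false o) o && ~~ oYp false (oMp false o) o)
   && (oYp true (oMp true o) o && oMp true o)) = yM * mM.
  rewrite -(@cindep_pred _ _ q x _ _ oYs oMs (fun y : bool * bool * bool * bool => ~~ y.1.2 && y.2) (fun m : bool * bool => ~~ m.1 && m.2) HYM).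
  by apply: cP_good => //; crush.
have h2 : cP q x (fun o => oYp true (oMp true o) o && oMp true o) = y1 * m1.
  rewrite -(@cindep_pred _ _ q x _ _ oYs oMs (fun y : bool * bool * bool * bool => y.2) (fun m : bool * bool => m.2) HYM).
  by apply: cP_good => //; crush.
have h3 : cP q x (fun o => ~~ oYp true false o && (oYp true true o && oMp true o)) = yM * m1.
  rewrite -(@cindep_pred _ _ q x _ _ oYs oMs (fun y : bool * bool * bool * bool => ~~ y.1.2 && y.2) (fun m : bool * bool => m.2) HYM).
  by apply: cP_good => //; crush.
have h4 : cP q x (fun o => oYp true true o && oMp true o) = y1 * m1.
  rewrite -(@cindep_pred _ _ q x _ _ oYs oMs (fun y : bool * bool * bool * bool => y.2) (fun m : bool * bool => m.2) HYM).
  by apply: cP_good => //; crush.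
have h5 : cP q x (fun o => ~~ oMp false o && oMp true o) = mM.
  by apply: cP_good => //; crush.
have h6 : cP q x (fun o => oMp true o) = m1.
  by apply: cP_good => //; crush.
have h7 : cP q x (fun o => oM o && (oA o == true)) = pa true * m1.
  rewrite -(@cindep_pred _ _ q x _ _ oA oPO (pred1 true) (fun v : (bool * bool) * (bool * bool * bool * bool) => v.1.2) HA).
  by apply: cP_good => //; crush.
have h8 : cP q x (fun o => oM o && (oA o == false)) = pa false * m0.
  rewrite -(@cindep_pred _ _ q x _ _ oA oPO (pred1 false) (fun v : (bool * bool) * (bool * bool * bool * bool) => v.1.1) HA).
  by apply: cP_good => //; crush.
have e1 : eps <= pa true * m1.
  have := Heps true true.
  rewrite -(@cindep_pred _ _ q x _ _ oA oPO (pred1 true) (fun v : (bool * bool) * (bool * bool * bool * bool) => v.1.2) HA).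
  by rewrite (@cP_good _ _ _ _ _ (fun o => (oA o == true) && (oM o == true))) //; crush.
have e2 : eps <= pa false * cP q x (fun o => ~~ (oMs o).1).
  have := Heps false false.
  rewrite -(@cindep_pred _ _ q x _ _ oA oPO (pred1 false) (fun v : (bool * bool) * (bool * bool * bool * bool) => ~~ v.1.1) HA).
  by rewrite (@cP_good _ _ _ _ _ (fun o => (oA o == false) && (oM o == false))) //; crush.
have hm : m1 = m0 + mM.
  rewrite /m1 (@cP_split _ _ q x _ (fun o => (oMs o).1)); congr (_ + _).
    by apply: cP_good => //; crush.
  by apply: cP_good => //; crush.
have hy : y1 = yM + y11.
  rewrite /y1 (@cP_split _ _ q x _ (fun o => ~~ (oYs o).1.2)); congr (_ + _).
    by apply: cP_good => //; crush.
  by apply: cP_good => //; crush.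
have ge0 E : 0 <= cP q x E by apply: cP_ge0.
have pa1 : pa true != 0.
  apply/eqP => h; move: e1; rewrite h mul0r; lra.
have pa0 : pa false != 0.
  apply/eqP => h; move: e2; rewrite h mul0r; lra.
have m10 : m1 != 0.
  apply/eqP => h; move: e1; rewrite h mulr0; lra.
have yMge : 0 <= yM := ge0 _.
have y11ge : 0 <= y11 := ge0 _.
have mMge : 0 <= mM := ge0 _.
rewrite /psiX /gammaX /ccP h1 h2 h3 h4 h5 h6 h7 h8.
have -> : pa false * m0 / pa false = m0 by field.
have -> : pa true * m1 / pa true = m1 by field.
have m1gt : 0 < m1 by rewrite lt0r m10 ge0.
have hF : mM / m1 = 1 - m0 / m1 by rewrite hm; field; rewrite -hm.
have [y10|y1n0] := eqVneq y1 0.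
  rewrite y10 !mul0r invr0 !mulr0 !mul0r; split => //; split => //.
  by rewrite divr_ge0 // ltW.
split; first by field; rewrite ?y1n0 ?m10.
split => //.
have -> : yM * mM / (y1 * m1) = (yM / y1) * (mM / m1) by field; rewrite ?y1n0 ?m10.
rewrite -[X in _ <= X]mul1r; apply: ler_wpM2r; first by rewrite divr_ge0 // ltW.
have y1gt : 0 < y1 by rewrite lt0r y1n0 ge0.
by rewrite ler_pdivrMr // mul1r hy lerDl.
Qed.


Lemma gd (Omega : Type) (A M Y : Omega -> bool)
  (Mp : bool -> Omega -> bool) (Yp : bool -> bool -> Omega -> bool) :
  (forall w a m, A w = a -> M w = m -> Y w = Yp a m w) ->
  (forall w a, A w = a -> M w = Mp a w) ->
  (forall w, (Yp true false w -> Yp true true w) /\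
             (Yp false false w -> Yp true false w) /\
             (Yp false true w -> Yp true true w) /\
             (Mp false w -> Mp true w)) ->
  forall w, good (data A M Y Mp Yp w).
Proof.
move=> A1a A1b A2 w.
move: (A1b w (A w) erefl) (A1a w (A w) (M w) erefl erefl) (A2 w).
rewrite /good /data /oM /oA /oY /oMp /oYp /=.
case: (A w); case: (M w); case: (Y w); case: (Mp false w); case: (Mp true w);
  case: (Yp false false w); case: (Yp false true w); case: (Yp true false w);
  case: (Yp true true w) => //= hM hY [h1 [h2 [h3 h4]]];
  try (by []); try (by have := h1 isT); try (by have := h2 isT);
  try (by have := h3 isT); try (by have := h4 isT).
Qed.

Theorem mainTheorem7 (R : realType)
  (dO : measure_display) (Omega : measurableType dO) (P : probability Omega R)
  (dT : measure_display) (T : measurableType dT)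
  (X : Omega -> T) (A M Y : Omega -> bool)
  (Mp : bool -> Omega -> bool) (Yp : bool -> bool -> Omega -> bool)
  (q : T -> outcome -> R) :
  measurable_fun setT X ->
  (forall o, measurable (data A M Y Mp Yp @^-1` [set o])) ->
  is_cond_dist P X (data A M Y Mp Yp) q ->
  (* (A1) consistency *)
  (forall w a m, A w = a -> M w = m -> Y w = Yp a m w) ->
  (forall w a, A w = a -> M w = Mp a w) ->
  (* (A2) monotonicity *)
  (forall w, (Yp true false w -> Yp true true w) /\
             (Yp false false w -> Yp true false w) /\
             (Yp false true w -> Yp true true w) /\
             (Mp false w -> Mp true w)) ->
  (* (A3) A independent of all potential variables given X *)
  {ae P, forall w, cindep q (X w) oA oPO} ->
  (* (A4) potential outcomes independent of potential mediators given X *)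
  {ae P, forall w, cindep q (X w) oYs oMs} ->
  (* (A5) and (A6) *)
  (exists eps : R, 0 < eps /\
     {ae P, forall w, forall a m : bool,
        eps <= cP q (X w) (fun o => (oA o == a) && (oM o == m))} /\
     {ae P, forall w, eps <= ccP q (X w) (fun o => oY o) (fun o => oA o && oM o)}) ->
  {ae P, forall w,
     psiX q (X w) =
       ccP q (X w) (fun o => ~~ oYp true false o) (fun o => oYp true true o && oMp true o)
       * ccP q (X w) (fun o => ~~ oMp false o) (fun o => oMp true o)
     /\ psiX q (X w) <= ccP q (X w) (fun o => ~~ oMp false o) (fun o => oMp true o)
     /\ ccP q (X w) (fun o => ~~ oMp false o) (fun o => oMp true o)
        = 1 - gammaX q false (X w) / gammaX q true (X w)}.
Proof.
move=> mX mD [q0 [q1 [qm qint]]] A1a A1b A2 A3 A4 [eps [eps0 [A5 A6]]].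
have hg := @gd _ A M Y Mp Yp A1a A1b A2.
have hempty o : ~~ good o -> data A M Y Mp Yp @^-1` [set o] = set0.
  move=> go; apply/seteqP; split => w //= hw.
  by move: go; rewrite -hw hg.
have hae o : ~~ good o -> {ae P, forall w, q (X w) o = 0}.
  move=> go.
  have mf : measurable_fun setT (fun w => (q (X w) o)%:E).
    by apply/measurable_EFinP; exact: measurableT_comp (qm o) mX.
  have : (\int[P]_(w in setT) `|(q (X w) o)%:E| = 0)%E.
    have := qint o setT measurableT.
    rewrite preimage_setT setIT hempty // measure0 => h.
    under eq_integral => w _ do rewrite gee0_abs ?lee_fin //.
    by rewrite -h.
  move/(ae_eq_integral_abs _ measurableT mf) => H.
  by apply: filterS H => w /(_ I) [].
have hall : {ae P, forall w, forall o, ~~ good o -> q (X w) o = 0}.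
  apply: (@filter_forall _ outcome (fun o w => ~~ good o -> q (X w) o = 0)) => o.
  case: (boolP (good o)) => g.
    by apply: aeW => w.
  by apply: filterS (hae o g) => w h _.
have FF : Filter (almost_everywhere P) := ae_filter_ringOfSetsType P.
have Hall := @filterI _ _ FF _ _ (@filterI _ _ FF _ _ hall A3) (@filterI _ _ FF _ _ A4 A5).
apply: (@filterS _ _ FF _ _ _ Hall) => w [[h1 h3] [h4 h5]].
exact: (@key R T q (X w) eps).
Qed.
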